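(* Let $q:G'\to G$ be an epimorphism of groups with finite abelian kernel $\Gamma$, let $W$ be a closed connected oriented surface of positive genus with $\pi=\pi_1(W)$ and first Betti number $b=2-\chi(W)$, and let $g:\pi\to G$ be an epimorphism. Then $g$ lifts to $G'$ (i.e. there is a homomorphism $g':\pi\to G'$ with $qg'=g$) if and only if $g_*([W])\in H_2(G;\mathbb{Z})$ lies in the image of $q_*:H_2(G';\mathbb{Z})\to H_2(G;\mathbb{Z})$. Moreover, if $g$ lifts to $G'$, then $$|\mathrm{Hom}_g(\pi,G')|=|\Gamma|^b\,|[\Gamma,G']|^{-1}.$$
   Context: $[W]\in H_2(W;\mathbb{Z})=H_2(\pi;\mathbb{Z})$ is the fundamental class. $\mathrm{Hom}_g(\pi,G')$ is the set of homomorphisms $g':\pi\to G'$ with $qg'=g$. $[\Gamma,G']$ is the subgroup of $\Gamma$ generated by commutators of elements of $\Gamma$ with elements of $G'$. *)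

(* Defs.v *)
From mathcomp Require Import all_boot ssralg ssrnum ssrint fingroup.
Set Implicit Arguments.
Unset Strict Implicit.
Unset Printing Implicit Defensive.
Import GRing.Theory.

Definition is_hom (G H : groupType) (f : G -> H) : Prop :=
  forall x y : G, f (x * y)%g = (f x * f y)%g.

Inductive gen_by (G : groupType) (S : G -> Prop) : G -> Prop :=
  | gen_one : gen_by S 1%g
  | gen_mem x : S x -> gen_by S x
  | gen_inv x : gen_by S x -> gen_by S x^-1%g
  | gen_mul x y : gen_by S x -> gen_by S y -> gen_by S (x * y)%g.

Definition card_is (T : eqType) (P : T -> Prop) (n : nat) : Prop :=
  exists s : seq T, [/\ uniq s, size s = n & forall x, x \in s <-> P x].

(* Integral group homology in degree 2 via the (inhomogeneous) bar    *)
(* complex  C_n(G) = Z[G^n],                                          *)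
(*   d[x] = 0,  d[x|y] = [y] - [xy] + [x],                            *)
(*   d[x|y|z] = [y|z] - [xy|z] + [x|yz] - [x|y],                      *)
(* so that H_2(G;Z) = ker d_2 / im d_3.  Chains are finite formal      *)
(* Z-linear combinations, represented as lists of (coefficient, cell).*)

Definition chain1 (G : groupType) := seq (int * G).
Definition chain2 (G : groupType) := seq (int * (G * G)).
Definition chain3 (G : groupType) := seq (int * (G * G * G)).

Definition coef (T : eqType) (c : seq (int * T)) (s : T) : int :=
  (\sum_(e <- c | e.2 == s) e.1)%R.

Definition bd2 (G : groupType) (c : chain2 G) : chain1 G :=
  flatten [seq [:: (e.1, e.2.2); (- e.1, e.2.1 * e.2.2)%g; (e.1, e.2.1)]%R
          | e <- c].

Definition bd3 (G : groupType) (c : chain3 G) : chain2 G :=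
  flatten [seq [:: (e.1, (e.2.1.2, e.2.2));
                   (- e.1, (e.2.1.1 * e.2.1.2, e.2.2)%g);
                   (e.1, (e.2.1.1, e.2.1.2 * e.2.2)%g);
                   (- e.1, (e.2.1.1, e.2.1.2))]%R
          | e <- c].

Definition cycle2 (G : groupType) (c : chain2 G) : Prop :=
  forall s : G, coef (bd2 c) s = 0%R.

Definition homologous2 (G : groupType) (c c' : chain2 G) : Prop :=
  exists B : chain3 G, forall s : G * G, (coef c s - coef c' s)%R = coef (bd3 B) s.

Definition chmap2 (G H : groupType) (f : G -> H) (c : chain2 G) : chain2 H :=
  [seq (e.1, (f e.2.1, f e.2.2)) | e <- c].

Definition in_image_H2 (G' G : groupType) (f : G' -> G) (c : chain2 G) : Prop :=
  exists z : chain2 G', cycle2 z /\ homologous2 (chmap2 f z) c.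

(* Closed oriented surface W of genus h >= 1:                          *)
(*   pi = pi_1(W) = < a_1,b_1,...,a_h,b_h | [a_1,b_1]...[a_h,b_h] >,   *)
(* with [x,y] = x^-1 y^-1 x y (MathComp's commutator).  A homomorphism *)
(* pi -> G is the same thing as a family (a_i, b_i) of elements of G   *)
(* satisfying the surface relation (images of the generators).        *)

Definition surface_rel (G : groupType) (h : nat) (a b : 'I_h -> G) : Prop :=
  foldr (fun i acc => [~ a i, b i] * acc)%g 1%g (enum 'I_h) = 1%g.

(* the relator word, letters (sign, generator-image); true = exponent +1 *)
Definition surface_word (G : groupType) (h : nat) (a b : 'I_h -> G)
  : seq (bool * G) :=
  flatten [seq [:: (false, a i); (false, b i); (true, a i); (true, b i)]
          | i <- enum 'I_h].

(* Fox-calculus 2-chain of a relator word read from the prefix p: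
   letter x^{+1} after prefix p contributes +[p|x],
   letter x^{-1} after prefix p contributes -[p x^-1 | x].
   Its boundary is sum_k eps_k [x_k] + [p] - [p * word]. *)
Fixpoint word_chain (G : groupType) (p : G) (w : seq (bool * G)) : chain2 G :=
  match w with
  | [::] => [::]
  | (true, x) :: w' => (1%R, (p, x)) :: word_chain (p * x)%g w'
  | (false, x) :: w' => ((-1)%R, (p * x^-1, x)%g) :: word_chain (p * x^-1)%g w'
  end.

(* g_*[W]: the image under g (given by the generator images a, b) of the
   standard 2-cycle representing the fundamental class [W] in
   H_2(pi;Z) = H_2(W;Z) (up to the sign fixed by the orientation). *)
Definition surface_class (G : groupType) (h : nat) (a b : 'I_h -> G) : chain2 G :=
  word_chain 1%g (surface_word a b).

(* l : 'I_h -> G' * G' is a lift g' of g (g' a_i = (l i).1, g' b_i = (l i).2):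
   it defines a homomorphism pi -> G' and q g' = g. *)
Definition is_lift (G' G : groupType) (q : G' -> G) (h : nat) (a b : 'I_h -> G)
  (l : {ffun 'I_h -> G' * G'}) : Prop :=
  surface_rel (fun i => (l i).1) (fun i => (l i).2) /\
  forall i, q (l i).1 = a i /\ q (l i).2 = b i.

(* Main.v *)
From HB Require Import structures.
Require Import Defs.
From mathcomp Require Import all_boot ssralg ssrnum ssrint fingroup.
Set Implicit Arguments. Unset Strict Implicit. Unset Printing Implicit Defensive.
Set Warnings "-notation-overridden -ambiguous-paths -redundant-canonical-projection".
Import GRing.Theory.
Section ZH.
Local Open Scope ring_scope.
Lemma zh1 (V : zmodType) (a b c d e : V) :
  a + (- b + c) + (b - d + e) = c - d + (a + e).
Proof.
by rewrite (addrC (- b)) -!addrA addKr addrCA; congr (_+_); exact: addrCA.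
Qed.
End ZH.
Section Lin.
Variables (T : eqType) (V : zmodType).
Implicit Types (c : seq (int * T)) (w : T -> V).
Definition lin w c : V := (\sum_(e <- c) w e.2 *~ e.1)%R.
Lemma lin_nil w : lin w [::] = 0%R. Proof. by rewrite /lin big_nil. Qed.
Lemma lin_cons w e c : lin w (e :: c) = (w e.2 *~ e.1 + lin w c)%R.
Proof. by rewrite /lin big_cons. Qed.
Lemma lin_cat w c1 c2 : lin w (c1 ++ c2) = (lin w c1 + lin w c2)%R.
Proof. by rewrite /lin big_cat. Qed.
Lemma coef_nil (s : T) : coef [::] s = 0%R. Proof. by rewrite /coef big_nil. Qed.
Lemma coef_cons e c s : coef (e :: c) s = ((if e.2 == s then e.1 else 0) + coef c s)%R.
Proof. by rewrite /coef big_cons; case: ifP => //; rewrite add0r. Qed.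
Lemma coef_cat c1 c2 s : coef (c1 ++ c2) s = (coef c1 s + coef c2 s)%R.
Proof. by rewrite /coef big_cat. Qed.

Lemma lin_coef_sum w c (u : seq T) : uniq u -> {subset map snd c <= u} ->
  lin w c = (\sum_(t <- u) w t *~ coef c t)%R.
Proof.
move=> uu; elim: c => [|e c ih] sub.
  by rewrite lin_nil big1 // => t _; rewrite coef_nil mulr0z.
rewrite lin_cons ih; last by move=> t ht; apply: sub; rewrite inE ht orbT.
have eu : e.2 \in u by apply: sub; rewrite inE eqxx.
under [in RHS]eq_bigr => t _ do rewrite coef_cons mulrzDr.
rewrite big_split /=; congr (_ + _)%R.
rewrite (bigD1_seq e.2) //= eqxx big1 ?addr0 // => t /negbTE ht.
by rewrite eq_sym ht mulr0z.
Qed.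

Lemma lin_coef w c1 c2 : (forall s, coef c1 s = coef c2 s) -> lin w c1 = lin w c2.
Proof.
move=> e; pose u := undup (map snd (c1 ++ c2)).
have uu : uniq u by apply: undup_uniq.
rewrite (@lin_coef_sum w c1 u) ?(@lin_coef_sum w c2 u) //.
- by apply: eq_bigr => t _; rewrite e.
- by move=> t ht; rewrite mem_undup map_cat mem_cat ht orbT.
- by move=> t ht; rewrite mem_undup map_cat mem_cat ht.
Qed.
End Lin.

Lemma coef_lin (T : eqType) (c : seq (int * T)) s :
  coef c s = lin (fun t => if t == s then 1%R else 0%R : int) c.
Proof.
elim: c => [|e c ih]; first by rewrite coef_nil lin_nil.
rewrite coef_cons lin_cons ih; congr (_ + _)%R.
by case: (e.2 == s); rewrite ?mulr1z ?mul0rz //= intz.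
Qed.

Lemma flatten_cons' (T : Type) (x : seq T) s : flatten (x :: s) = x ++ flatten s.
Proof. by []. Qed.
Section Words.
Variable H : groupType.
Definition wprod (w : seq (bool * H)) : H :=
  foldr (fun e acc => (if e.1 then e.2 else e.2^-1) * acc)%g 1%g w.
Definition sgnb (b : bool) : int := if b then 1%R else (-1)%R.

Lemma wprod_cat w1 w2 : wprod (w1 ++ w2) = (wprod w1 * wprod w2)%g.
Proof. by elim: w1 => [|e w1 ih] /=; rewrite ?mul1g // ih mulgA. Qed.

Lemma bd2_cons (e : int * (H * H)) c :
  bd2 (e :: c) = [:: (e.1, e.2.2); (- e.1, e.2.1 * e.2.2)%g; (e.1, e.2.1)]%R ++ bd2 c.
Proof. by []. Qed.
Lemma bd3_cons (e : int * (H * H * H)) c :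
  bd3 (e :: c) = [:: (e.1, (e.2.1.2, e.2.2));
                   (- e.1, (e.2.1.1 * e.2.1.2, e.2.2)%g);
                   (e.1, (e.2.1.1, e.2.1.2 * e.2.2)%g);
                   (- e.1, (e.2.1.1, e.2.1.2))]%R ++ bd3 c.
Proof. by []. Qed.

Lemma lin_bd2_wc (V : zmodType) (f : H -> V) p w :
  lin f (bd2 (word_chain p w)) =
  (f p - f (p * wprod w)%g + \sum_(e <- w) f e.2 *~ sgnb e.1)%R.
Proof.
elim: w p => [|[[] x] w ih] p /=.
- by rewrite lin_nil big_nil mulg1 subrr addr0.
- rewrite bd2_cons lin_cat ih big_cons /= /lin !big_cons big_nil /=.
  rewrite mulgA mulr1z mulrN1z mulr1z addr0.
  by rewrite zh1.
- rewrite bd2_cons lin_cat ih big_cons /= /lin !big_cons big_nil /=.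
  rewrite mulgVK mulgA opprK mulr1z !mulrN1z addr0.
  by rewrite (addrC (f p)) zh1.
Qed.

Variable h : nat.
Lemma letters_surface (V : zmodType) (f : H -> V) (a b : 'I_h -> H) :
  (\sum_(e <- surface_word a b) f e.2 *~ sgnb e.1)%R = 0%R.
Proof.
rewrite /surface_word; elim: (enum 'I_h) => [|i r ih] /=; first by rewrite big_nil.
rewrite !big_cons ih /= !mulrN1z !mulr1z addr0.
by rewrite addrCA addKr addNr.
Qed.

Definition relator (a b : 'I_h -> H) : H :=
  foldr (fun i acc => [~ a i, b i] * acc)%g 1%g (enum 'I_h).

Lemma wprod_surface (a b : 'I_h -> H) : wprod (surface_word a b) = relator a b.
Proof.
rewrite /surface_word /relator; elim: (enum 'I_h) => [|i r ih] //=.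
by rewrite ih /commg /conjg !mulgA.
Qed.
End Words.

Lemma chmap2_wc (H1 H2 : groupType) (f : H1 -> H2) (fM : is_hom f) p w :
  chmap2 f (word_chain p w) = word_chain (f p) (map (fun e => (e.1, f e.2)) w).
Proof.
have f1 : f 1%g = 1%g by apply: (@mulgI _ (f 1%g)); rewrite -fM !mulg1.
have fV x : f x^-1%g = (f x)^-1%g by apply: (@mulgI _ (f x)); rewrite -fM !mulgV f1.
elim: w p => [|[[] x] w ih] p //=; rewrite ih ?fM ?fV //.
Qed.

Lemma map_surface (H1 H2 : groupType) (f : H1 -> H2) h (a b : 'I_h -> H1) :
  map (fun e => (e.1, f e.2)) (surface_word a b) =
  surface_word (fun i => f (a i)) (fun i => f (b i)).
Proof. by rewrite /surface_word map_flatten -map_comp. Qed.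
Section Main.
Variables (G G' : groupType) (q : G' -> G) (sG : seq G').
Hypothesis qM : is_hom q.
Hypothesis Kab : forall x y : G', q x = 1%g -> q y = 1%g -> (x * y = y * x)%g.
Hypothesis sGP : forall x, x \in sG <-> q x = 1%g.

Local Notation K x := (q x = 1%g).

Lemma q1 : q 1%g = 1%g.
Proof. by apply: (@mulgI _ (q 1%g)); rewrite -qM !mulg1. Qed.
Lemma qV x : q x^-1%g = (q x)^-1%g.
Proof. by apply: (@mulgI _ (q x)); rewrite -qM !mulgV q1. Qed.
Lemma qJ x y : q (x ^ y)%g = (q x ^ q y)%g.
Proof. by rewrite /conjg !qM qV. Qed.
Lemma qR x y : q [~ x, y]%g = [~ q x, q y]%g.
Proof. by rewrite /commg qM qV qJ. Qed.
Lemma K1 : K 1%g. Proof. exact: q1. Qed.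
Lemma KM x y : K x -> K y -> K (x * y)%g.
Proof. by move=> hx hy; rewrite qM hx hy mulg1. Qed.
Lemma KV x : K x -> K x^-1%g.
Proof. by move=> hx; rewrite qV hx invg1. Qed.
Lemma KJ x y : K x -> K (x ^ y)%g.
Proof. by move=> hx; rewrite qJ hx conj1g. Qed.

Lemma KJq c u v : K c -> q u = q v -> (c ^ u = c ^ v)%g.
Proof.
move=> hc huv; have hk : K (u^-1 * v)%g by rewrite qM qV huv mulVg.
have -> : v = (u * (u^-1 * v))%g by rewrite mulKVg.
rewrite conjgM; apply/esym/conjg_fixP/commgP.
exact: Kab (KJ u hc) hk.
Qed.

Lemma in1 : (1%g : G') \in sG. Proof. by apply/sGP; exact: q1. Qed.

Definition GT := seq_sub sG.
HB.instance Definition _ := Finite.on GT.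

Lemma valK (u : GT) : K (val u).
Proof. by apply/sGP; exact: valP. Qed.

Definition g0 : GT := SeqSub in1.
Definition gadd (u v : GT) : GT := insubd u (val u * val v)%g.
Definition gopp (u : GT) : GT := insubd u (val u)^-1%g.
Lemma val_gadd u v : val (gadd u v) = (val u * val v)%g.
Proof. by rewrite val_insubd; case: ifP => //; move/negP; case; apply/sGP; apply: KM; apply: valK. Qed.
Lemma val_gopp u : val (gopp u) = (val u)^-1%g.
Proof. by rewrite val_insubd; case: ifP => //; move/negP; case; apply/sGP; apply: KV; apply: valK. Qed.
Lemma gaddA : associative gadd.
Proof. by move=> u v w; apply: val_inj; rewrite !val_gadd mulgA. Qed.
Lemma gaddC : commutative gadd.
Proof. by move=> u v; apply: val_inj; rewrite !val_gadd Kab //; apply: valK. Qed.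
Lemma gadd0 : left_id g0 gadd.
Proof. by move=> u; apply: val_inj; rewrite !val_gadd mul1g. Qed.
Lemma gaddN : left_inverse g0 gopp gadd.
Proof. by move=> u; apply: val_inj; rewrite !val_gadd val_gopp mulVg. Qed.
HB.instance Definition _ := GRing.isZmodule.Build GT gaddA gaddC gadd0 gaddN.

Lemma valD (u v : GT) : val (u + v)%R = (val u * val v)%g. Proof. exact: val_gadd. Qed.
Lemma valN (u : GT) : val (- u)%R = (val u)^-1%g. Proof. exact: val_gopp. Qed.
Lemma val0 : val (0 : GT)%R = 1%g. Proof. by []. Qed.

Definition inG (x : G') : GT := insubd (0%R : GT) x.
Lemma val_inG x : K x -> val (inG x) = x.
Proof. by move=> hx; rewrite val_insubd; case: ifP => //; move/negP; case; apply/sGP. Qed.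
Lemma inGK u : inG (val u) = u.
Proof. by apply: val_inj; rewrite val_inG //; apply: valK. Qed.
Lemma inGM x y : K x -> K y -> inG (x * y)%g = (inG x + inG y)%R.
Proof. by move=> hx hy; apply: val_inj; rewrite valD !val_inG //; apply: KM. Qed.
Lemma inGV x : K x -> inG x^-1%g = (- inG x)%R.
Proof. by move=> hx; apply: val_inj; rewrite valN !val_inG //; apply: KV. Qed.
Lemma inG1 : inG 1%g = 0%R.
Proof. by apply: val_inj; rewrite val_inG //; apply: K1. Qed.

Definition act (g : G') (u : GT) : GT := inG (val u ^ g)%g.
Lemma val_act g u : val (act g u) = (val u ^ g)%g.
Proof. by rewrite val_inG //; apply: KJ; apply: valK. Qed.
Lemma actD g u v : act g (u + v)%R = (act g u + act g v)%R.
Proof. by apply: val_inj; rewrite !(valD, val_act) conjMg. Qed.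
Lemma actN g u : act g (- u)%R = (- act g u)%R.
Proof. by apply: val_inj; rewrite !(valN, val_act) conjVg. Qed.
Lemma act0 g : act g 0%R = 0%R.
Proof. by apply: val_inj; rewrite !(val0, val_act) conj1g. Qed.
Lemma act1 u : act 1%g u = u.
Proof. by apply: val_inj; rewrite val_act conjg1. Qed.
Lemma actM g h u : act (g * h)%g u = act h (act g u).
Proof. by apply: val_inj; rewrite !val_act conjgM. Qed.
Lemma actq g h u : q g = q h -> act g u = act h u.
Proof. by move=> e; apply: val_inj; rewrite !val_act; apply: KJq => //; apply: valK. Qed.
Lemma actK g u : act g^-1%g (act g u) = u.
Proof. by rewrite -actM mulgV act1. Qed.
Lemma actKV g u : act g (act g^-1%g u) = u.
Proof. by rewrite -actM mulVg act1. Qed.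
Lemma actMz g u (n : int) : act g (u *~ n)%R = ((act g u) *~ n)%R.
Proof.
have hn : forall m : nat, act g (u *+ m)%R = (act g u *+ m)%R.
  by elim=> [|m ih]; rewrite ?act0 // !mulrS actD ih.
by case: n => m; rewrite ?NegzE ?mulrNz ?actN hn.
Qed.

Hypothesis qS : forall x : G, exists y : G', q y = x.
Lemma qS' x : exists y : G', q y == x.
Proof. by case: (qS x) => y e; exists y; apply/eqP. Qed.
Definition sec (x : G) : G' := xchoose (qS' x).
Lemma secK x : q (sec x) = x.
Proof. exact: (eqP (xchooseP (qS' x))). Qed.

Definition Comm (x : G') := exists c y : G', q c = 1%g /\ x = [~ c, y]%g.
Local Notation M := (gen_by Comm).
Definition Mt (u : GT) := M (val u).

Lemma M_K x : M x -> K x.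
Proof.
elim=> [|y [c [g [hc ->]]]|y _ hy|y z _ hy _ hz]; rewrite ?q1 //.
- by rewrite /commg; apply: KM; [apply: KV | apply: KJ].
- exact: KV.
- exact: KM.
Qed.
Lemma M_conj x g : M x -> M (x ^ g)%g.
Proof.
elim=> [|y [c [k [hc ->]]]|y _ hy|y z _ hy _ hz].
- by rewrite conj1g; apply: gen_one.
- by rewrite conjRg; apply: gen_mem; exists (c ^ g)%g, (k ^ g)%g; split => //; apply: KJ.
- by rewrite conjVg; apply: gen_inv.
- by rewrite conjMg; apply: gen_mul.
Qed.

Lemma Mt0 : Mt 0%R. Proof. exact: gen_one. Qed.
Lemma MtD u v : Mt u -> Mt v -> Mt (u + v)%R.
Proof. by rewrite /Mt valD; apply: gen_mul. Qed.
Lemma MtN u : Mt u -> Mt (- u)%R.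
Proof. by rewrite /Mt valN; apply: gen_inv. Qed.
Lemma MtB u v : Mt u -> Mt v -> Mt (u - v)%R.
Proof. by move=> hu hv; apply: MtD => //; apply: MtN. Qed.
Lemma MtMz u n : Mt u -> Mt (u *~ n)%R.
Proof.
move=> hu; have hn : forall m : nat, Mt (u *+ m)%R.
  by elim=> [|m ih]; [apply: Mt0 | rewrite mulrS; apply: MtD].
by case: n => m; rewrite ?NegzE ?mulrNz; [|apply: MtN]; apply: hn.
Qed.
Lemma Mt_act g u : Mt u -> Mt (act g u).
Proof. by rewrite /Mt val_act; apply: M_conj. Qed.
Lemma Mt_comm g d : Mt (- d + act g d)%R.
Proof.
rewrite /Mt valD valN val_act; apply: gen_mem.
by exists (val d), g; split => //; apply: valK.
Qed.
Lemma Mt_comm' g d : Mt (d - act g d)%R.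
Proof. by rewrite -[d]opprK -opprD opprK; apply: MtN; apply: Mt_comm. Qed.

Lemma Kf x y : K (sec x * sec y * (sec (x * y))^-1)%g.
Proof. by rewrite !qM qV !secK mulgV. Qed.
Definition w2 (xy : G * G) : GT :=
  inG (sec xy.1 * sec xy.2 * (sec (xy.1 * xy.2))^-1)%g.
Lemma Kt u : K (sec (q u) * u^-1)%g.
Proof. by rewrite qM qV secK mulgV. Qed.
Definition tau (u : G') : GT := inG (sec (q u) * u^-1)%g.

Lemma lin4 (T : eqType) (V : zmodType) (w : T -> V) n t1 t2 t3 t4 :
  lin w [:: (n, t1); (- n, t2); (n, t3); (- n, t4)]%R =
  ((w t1 - w t2 + w t3 - w t4) *~ n)%R.
Proof. by rewrite /lin !big_cons big_nil /= !mulrNz !mulrzDl !mulNrz addr0 !addrA. Qed.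
Lemma lin3 (T : eqType) (V : zmodType) (w : T -> V) n t1 t2 t3 :
  lin w [:: (n, t1); (- n, t2); (n, t3)]%R = ((w t1 - w t2 + w t3) *~ n)%R.
Proof. by rewrite /lin !big_cons big_nil /= !mulrNz !mulrzDl !mulNrz addr0 !addrA. Qed.

Lemma cocycle x y z :
  (w2 (x, y) + w2 ((x * y)%g, z))%R = (act (sec x)^-1 (w2 (y, z)) + w2 (x, (y * z)%g))%R.
Proof.
apply: val_inj; rewrite !valD val_act /w2 /= !val_inG ?Kf //.
rewrite /conjg invgK.
by rewrite !mulgA !mulgVK.
Qed.

Lemma Mt_bd3 (B : chain3 G) : Mt (lin w2 (bd3 B)).
Proof.
elim: B => [|[n [[x y] z]] B ih]; first by rewrite lin_nil; apply: Mt0.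
rewrite bd3_cons lin_cat; apply: MtD => //; rewrite lin4 /=; apply: MtMz.
have -> : (w2 (y, z) - w2 ((x * y)%g, z) + w2 (x, (y * z)%g) - w2 (x, y))%R =
          (w2 (y, z) - act (sec x)^-1 (w2 (y, z)))%R.
  have e := cocycle x y z.
  rewrite addrAC -(addrA (w2 (y, z))) -opprD (addrC (w2 ((x * y)%g, z))) e.
  by rewrite opprD addrA subrK.
exact: Mt_comm'.
Qed.

Lemma zh4 (V : zmodType) (w t1 t2 t3 g : V) :
  (w + t3 = t1 + g -> w - (t2 - t3 + t1) = - t2 + g)%R.
Proof.
move=> e; have -> : g = (w + t3 - t1)%R by rewrite e (addrC t1) addrK.
by rewrite !opprD !opprK !addrA (addrC w).
Qed.

Lemma C2cell u v :
  (w2 (q u, q v) + tau (u * v)%g = tau u + act u^-1 (tau v))%R.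
Proof.
apply: val_inj; rewrite !valD val_act /w2 /tau /= !val_inG ?Kf ?Kt //.
rewrite /conjg invgK qM !invMg.
by rewrite !mulgA !mulgVK.
Qed.

Lemma Mt_C2 (z : chain2 G') : Mt (lin w2 (chmap2 q z) - lin tau (bd2 z))%R.
Proof.
elim: z => [|[n [u v]] z ih]; first by rewrite !lin_nil subrr; apply: Mt0.
rewrite bd2_cons lin_cat /= lin_cons lin3 /= opprD addrACA; apply: MtD => //.
rewrite -mulrzBl; apply: MtMz; rewrite (@zh4 _ _ _ _ _ _ (C2cell u v)).
exact: Mt_comm.
Qed.

Lemma K_cycle_lin (z : chain2 G') : cycle2 z -> lin tau (bd2 z) = 0%R.
Proof.
move=> hz; rewrite (@lin_coef _ _ tau (bd2 z) [::]) ?lin_nil // => s.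
by rewrite hz coef_nil.
Qed.

Variables (h : nat) (a b : 'I_h -> G).
Hypothesis hrel : surface_rel a b.

Definition relr (r : seq 'I_h) (X Y : 'I_h -> G') : G' :=
  foldr (fun i acc => [~ X i, Y i] * acc)%g 1%g r.
Lemma relr_relator X Y : relr (enum 'I_h) X Y = relator X Y. Proof. by []. Qed.
Lemma q_relr r X Y :
  q (relr r X Y) = foldr (fun i acc => [~ q (X i), q (Y i)] * acc)%g 1%g r.
Proof. by elim: r => [|i r ih] /=; rewrite ?q1 // qM qR ih. Qed.
Lemma eq_relr r X Y X' Y' : X =1 X' -> Y =1 Y' -> relr r X Y = relr r X' Y'.
Proof. by move=> eX eY; elim: r => [|i r ih] //=; rewrite ih eX eY. Qed.

Definition x0 i := sec (a i).
Definition y0 i := sec (b i).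
Definition R0 := relr (enum 'I_h) x0 y0.
Lemma KR0 : K R0.
Proof.
rewrite /R0 q_relr; have := hrel; rewrite /surface_rel => e.
rewrite -[RHS]e; elim: (enum 'I_h) => [|i r ih] //=.
by rewrite ih /x0 /y0 !secK.
Qed.

Lemma chmap_S :
  chmap2 q (word_chain 1%g (surface_word x0 y0)) = surface_class a b.
Proof.
rewrite (chmap2_wc qM) map_surface q1 /surface_class.
congr word_chain; rewrite /surface_word; congr flatten; apply: eq_map => i.
by rewrite /x0 /y0 !secK.
Qed.

Lemma Phi_S : Mt (lin w2 (surface_class a b) - inG R0)%R.
Proof.
have := Mt_C2 (word_chain 1%g (surface_word x0 y0)).
rewrite chmap_S lin_bd2_wc letters_surface addr0 mul1g wprod_surface -relr_relator -/R0.
have -> : (tau 1%g - tau R0)%R = inG R0.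
  have Ks : K (sec 1%g) by rewrite secK.
  rewrite /tau q1 invg1 mulg1 KR0 inGM ?KV ?KR0 // opprD addrA subrr add0r.
  by rewrite inGV ?KR0 // opprK.
by [].
Qed.

Lemma hom_to_M : in_image_H2 q (surface_class a b) -> M R0.
Proof.
case=> z [cz [B hB]].
have e : lin w2 (chmap2 q z) = lin w2 (surface_class a b ++ bd3 B).
  by apply: lin_coef => s; rewrite coef_cat -hB addrC subrK.
have hz : Mt (lin w2 (chmap2 q z)).
  by have := Mt_C2 z; rewrite K_cycle_lin // subr0.
have hS : Mt (lin w2 (surface_class a b)).
  have -> : lin w2 (surface_class a b) = (lin w2 (chmap2 q z) - lin w2 (bd3 B))%R.
    by rewrite e lin_cat addrK.
  by apply: MtB => //; apply: Mt_bd3.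
have : Mt (inG R0).
  have -> : inG R0 = (lin w2 (surface_class a b) - (lin w2 (surface_class a b) - inG R0))%R.
    by rewrite opprB addrC subrK.
  by apply: MtB => //; exact: Phi_S.
by rewrite /Mt val_inG // KR0.
Qed.

Lemma lift_to_hom l : is_lift q a b l -> in_image_H2 q (surface_class a b).
Proof.
case=> hl hq; pose X i := (l i).1; pose Y i := (l i).2.
exists (word_chain 1%g (surface_word X Y)); split.
  move=> s; rewrite coef_lin lin_bd2_wc.
  rewrite (letters_surface (fun t => if t == s then 1%R else 0%R : int)) addr0 mul1g wprod_surface.
  have e : relator X Y = 1%g by exact: hl.
  by rewrite e subrr.
exists [::] => s; rewrite (chmap2_wc qM) map_surface q1 /surface_class.
have -> : surface_word (fun i => q (X i)) (fun i => q (Y i)) = surface_word a b.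
  rewrite /surface_word; congr flatten; apply: eq_map => i.
  by rewrite /X /Y !(proj1 (hq i)) !(proj2 (hq i)).
by rewrite subrr /bd3 /= coef_nil.
Qed.

Definition kc i (c : GT) : GT := (- c + act ((x0 i)^-1 * y0 i * x0 i) c)%R.
Definition ke i (e : GT) : GT := (- act (x0 i) e + act [~ x0 i, y0 i]^-1 e)%R.
Definition kap i c e := (kc i c + ke i e)%R.

Lemma kapP i c e :
  (val (kap i c e) * [~ x0 i, y0 i])%g = [~ x0 i * val c, y0 i * val e]%g.
Proof.
rewrite /kap /kc /ke addrA (addrAC _ _ (- act (x0 i) e)%R).
rewrite !valD !valN !val_act.
rewrite /commg /conjg !invMg !invgK !mulgA.
by rewrite ?(mulgK, mulgVK).
Qed.

Definition Ff (r : seq 'I_h) (c e : 'I_h -> GT) : GT :=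
  foldr (fun i acc => kap i (c i) (e i) + act [~ x0 i, y0 i]^-1 acc)%R 0%R r.
Definition xl (c : 'I_h -> GT) i := (x0 i * val (c i))%g.
Definition yl (e : 'I_h -> GT) i := (y0 i * val (e i))%g.

Lemma relr_cons i r X Y : relr (i :: r) X Y = ([~ X i, Y i] * relr r X Y)%g.
Proof. by []. Qed.
Lemma Ff_cons i r c e :
  Ff (i :: r) c e = (kap i (c i) (e i) + act [~ x0 i, y0 i]^-1 (Ff r c e))%R.
Proof. by []. Qed.
Lemma relF r c e : relr r (xl c) (yl e) = (val (Ff r c e) * relr r x0 y0)%g.
Proof.
elim: r => [|i r ih]; first by rewrite /= mulg1.
rewrite relr_cons Ff_cons relr_cons ih /xl /yl -kapP valD val_act /conjg invgK.
by rewrite /commg /conjg !invMg !invgK !mulgA ?(mulgK, mulgVK).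
Qed.

Lemma kc_add i (c c' : GT) : kc i (c + c')%R = (kc i c + kc i c')%R.
Proof. by rewrite /kc opprD actD addrACA. Qed.
Lemma ke_add i (e e' : GT) : ke i (e + e')%R = (ke i e + ke i e')%R.
Proof. by rewrite /ke !actD opprD addrACA. Qed.
Lemma kap_add i (c c' e e' : GT) : kap i (c + c')%R (e + e')%R = (kap i c e + kap i c' e')%R.
Proof. by rewrite /kap kc_add ke_add addrACA. Qed.
Lemma kap0 i : kap i 0%R 0%R = 0%R.
Proof. by rewrite /kap /kc /ke !act0 oppr0 !addr0. Qed.

Lemma Ff_add r c c' e e' :
  Ff r (fun j => c j + c' j)%R (fun j => e j + e' j)%R = (Ff r c e + Ff r c' e')%R.
Proof. by elim: r => [|i r ih] /=; rewrite ?addr0 // ih kap_add actD addrACA. Qed.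
Lemma Ff_eq r c c' e e' : {in r, c =1 c'} -> {in r, e =1 e'} -> Ff r c e = Ff r c' e'.
Proof.
elim: r => [|i r ih] //= hc he.
rewrite hc ?he ?inE ?eqxx // ih // => j hj; [apply: hc | apply: he];
  by rewrite inE hj orbT.
Qed.
Lemma Ff0 r : Ff r (fun=> 0%R) (fun=> 0%R) = 0%R.
Proof. by elim: r => [|i r ih] //=; rewrite ih act0 kap0 addr0. Qed.
Lemma Ff_zero r c e : {in r, forall j, c j = 0%R} -> {in r, forall j, e j = 0%R} ->
  Ff r c e = 0%R.
Proof. by move=> hc he; rewrite (@Ff_eq r c (fun=> 0%R) e (fun=> 0%R)) ?Ff0. Qed.
Lemma FfN r c e : Ff r (fun j => - c j)%R (fun j => - e j)%R = (- Ff r c e)%R.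
Proof.
apply/eqP; rewrite -addr_eq0 addrC -Ff_add.
by rewrite (@Ff_eq r _ (fun=> 0%R) _ (fun=> 0%R)) ?Ff0 // => j _; rewrite subrr.
Qed.

Lemma ke_comm i e :
  ke i e = (- act (x0 i) e + act ((x0 i)^-1 * [~ x0 i, y0 i]^-1) (act (x0 i) e))%R.
Proof. by rewrite actM actK. Qed.
Lemma Mt_F r c e : Mt (Ff r c e).
Proof.
elim: r => [|i r ih] /=; first exact: Mt0.
apply: MtD; last exact: Mt_act.
apply: MtD; first exact: Mt_comm.
by rewrite ke_comm; apply: Mt_comm.
Qed.

Definition imF r (u : GT) := exists c e, Ff r c e = u.
Lemma imF0 r : imF r 0%R.
Proof. by exists (fun=> 0%R), (fun=> 0%R); rewrite Ff0. Qed.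
Lemma imFD r u v : imF r u -> imF r v -> imF r (u + v)%R.
Proof.
by case=> c [e <-] [c' [e' <-]]; exists (fun j => c j + c' j)%R, (fun j => e j + e' j)%R;
  rewrite Ff_add.
Qed.
Lemma imFN r u : imF r u -> imF r (- u)%R.
Proof. by case=> c [e <-]; exists (fun j => - c j)%R, (fun j => - e j)%R; rewrite FfN. Qed.

Definition Pr r (g : G') := forall d, imF r (- d + act g d)%R.
Lemma Pr1 r : Pr r 1%g.
Proof. by move=> d; rewrite act1 addNr; apply: imF0. Qed.
Lemma PrM r g k : Pr r g -> Pr r k -> Pr r (g * k)%g.
Proof.
move=> hg hk d; rewrite actM.
have -> : (- d + act k (act g d) = (- d + act g d) + (- act g d + act k (act g d)))%R.
  by rewrite addrA addrK.
by apply: imFD.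
Qed.
Lemma PrV r g : Pr r g -> Pr r g^-1%g.
Proof.
move=> hg d; have := imFN (hg (act g^-1 d)); rewrite actKV opprD opprK.
by rewrite addrC.
Qed.
Lemma Prq r g k : q g = q k -> Pr r g -> Pr r k.
Proof. by move=> e hg d; rewrite -(actq d e). Qed.
Lemma PrJ r g k : Pr r g -> Pr r k -> Pr r (k^-1 * g * k)%g.
Proof. by move=> hg hk; apply: PrM; [apply: PrM => //; apply: PrV | ]. Qed.

Lemma gid1 (x y : G') :
  x^-1%g = ((x^-1 * y * x) * (x^-1 * [~ x, y]^-1) * (x^-1 * y * x)^-1)%g.
Proof. by rewrite /commg /conjg !invMg !invgK !mulgA ?(mulgK, mulgVK). Qed.
Lemma gid2 (x y : G') : y = (x * (x^-1 * y * x) * x^-1)%g.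
Proof. by rewrite !mulgA mulgK mulgV mul1g. Qed.
Lemma gid3 (x y : G') : [~ x, y]%g = (x^-1 * (y^-1 * x * y))%g.
Proof. by rewrite /commg /conjg !mulgA. Qed.
Lemma gid4 (w g : G') : g = ((w^-1)^-1 * (w^-1 * g * w) * w^-1)%g.
Proof. by rewrite invgK !mulgA mulgK mulgV mul1g. Qed.

Lemma Pr_step i r g : i \notin r -> Pr r g ->
  Pr (i :: r) (([~ x0 i, y0 i]^-1)^-1 * g * [~ x0 i, y0 i]^-1)%g.
Proof.
move=> ni hg d'; set w := ([~ x0 i, y0 i]^-1)%g.
have [c [e he]] := hg (act w^-1 d').
exists (fun j => if j == i then 0%R else c j), (fun j => if j == i then 0%R else e j).
rewrite Ff_cons eqxx kap0 add0r.
rewrite (@Ff_eq r _ c _ e); first last.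
- by move=> j hj /=; case: eqP => // eji; rewrite -eji hj in ni.
- by move=> j hj /=; case: eqP => // eji; rewrite -eji hj in ni.
by rewrite he actD actN -/w actKV !actM.
Qed.

Lemma Pr_head i r : i \notin r -> Pr (i :: r) (x0 i) /\ Pr (i :: r) (y0 i).
Proof.
move=> ni.
have zr : forall d : GT, {in r, forall j, (if j == i then d else 0%R) = 0%R}.
  by move=> d j hj; case: eqP => // eji; rewrite -eji hj in ni.
have hu : Pr (i :: r) ((x0 i)^-1 * y0 i * x0 i)%g.
  move=> d; exists (fun j => if j == i then d else 0%R), (fun=> 0%R).
  rewrite Ff_cons eqxx (Ff_zero (zr d)); last by move=> j _.
  by rewrite act0 addr0 /kap /ke !act0 oppr0 !addr0.
have hv : Pr (i :: r) ((x0 i)^-1 * [~ x0 i, y0 i]^-1)%g.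
  move=> d; exists (fun=> 0%R), (fun j => if j == i then act (x0 i)^-1 d else 0%R).
  rewrite Ff_cons eqxx Ff_zero; [|by move=> j _| exact: zr].
  by rewrite act0 addr0 /kap /kc act0 oppr0 !add0r ke_comm actKV.
have hx : Pr (i :: r) (x0 i).
  rewrite -[x0 i]invgK; apply: PrV; rewrite (gid1 (x0 i) (y0 i)).
  by apply: PrM; [apply: PrM | apply: PrV].
split=> //; rewrite (gid2 (x0 i) (y0 i)).
by apply: PrM; [apply: PrM | apply: PrV].
Qed.

Lemma Pr_gens r : uniq r -> forall j, j \in r -> Pr r (x0 j) /\ Pr r (y0 j).
Proof.
elim: r => [|i r ih] //= /andP [ni ur] j.
have [hx hy] := Pr_head ni.
have hw : Pr (i :: r) ([~ x0 i, y0 i]^-1)%g.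
  by apply: PrV; rewrite gid3; exact: PrM (PrV hx) (PrM (PrM (PrV hy) hx) hy).
rewrite inE; case: eqP => [-> _ | _ /= hj]; first by split.
have [h1 h2] := ih ur j hj.
split; [rewrite (gid4 [~ x0 i, y0 i]^-1 (x0 j)) | rewrite (gid4 [~ x0 i, y0 i]^-1 (y0 j))].
  exact: PrM (PrM (PrV (PrV hw)) (Pr_step ni h1)) (PrV hw).
exact: PrM (PrM (PrV (PrV hw)) (Pr_step ni h2)) (PrV hw).
Qed.

Hypothesis hgen : forall x : G, gen_by (fun y => exists i, y = a i \/ y = b i) x.

Lemma Pr_all g : Pr (enum 'I_h) g.
Proof.
have : forall x, gen_by (fun y => exists i, y = a i \/ y = b i) x ->
  forall g, q g = x -> Pr (enum 'I_h) g; last by apply; [apply: hgen|].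
move=> x; elim=> {x} [|x [i hi]|x _ ih|x y _ ihx _ ihy] g0 hg0.
- by apply: (Prq (k := g0) _ (@Pr1 _)); rewrite q1.
- have [hx hy] := Pr_gens (enum_uniq 'I_h) (mem_enum _ i).
  case: hi => ex; rewrite ex in hg0.
    by apply: Prq hx; rewrite hg0 /x0 secK.
  by apply: Prq hy; rewrite hg0 /y0 secK.
- rewrite -[g0]invgK; apply: PrV; apply: ih; rewrite qV hg0 invgK //.
- apply: (Prq (g := (sec x * sec y)%g)); first by rewrite hg0 qM !secK.
  by apply: PrM; [apply: ihx | apply: ihy]; rewrite secK.
Qed.

Lemma M_imF m : M m -> imF (enum 'I_h) (inG m).
Proof.
elim=> [|y [c [k [hc ->]]]|y hy ih|y z hy ihy hz ihz].
- by rewrite inG1; apply: imF0.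
- have -> : inG [~ c, k]%g = (- inG c + act k (inG c))%R.
    apply: val_inj; rewrite valD valN val_act !val_inG //.
    by rewrite /commg; apply: KM; [apply: KV | apply: KJ].
  exact: Pr_all.
- by rewrite inGV; [apply: imFN | apply: M_K].
- by rewrite inGM; [apply: imFD | apply: M_K | apply: M_K].
Qed.

Lemma relr_lift c e :
  relr (enum 'I_h) (xl c) (yl e) = 1%g <-> Ff (enum 'I_h) c e = (- inG R0)%R.
Proof.
rewrite relF; split=> [E | ->].
  apply: val_inj; rewrite valN val_inG ?KR0 //.
  by apply: (@mulIg _ R0); rewrite E mulVg.
by rewrite valN val_inG ?KR0 // mulVg.
Qed.

Definition liftof (c e : 'I_h -> GT) : {ffun 'I_h -> G' * G'} :=
  [ffun i => (xl c i, yl e i)].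

Lemma liftofP c e : is_lift q a b (liftof c e) <-> Ff (enum 'I_h) c e = (- inG R0)%R.
Proof.
split.
  case=> hl _; apply/relr_lift; rewrite -[RHS]hl; apply: eq_relr => i; by rewrite ffunE.
move=> /relr_lift E; split.
  change (relr (enum 'I_h) (fun i => (liftof c e i).1) (fun i => (liftof c e i).2) = 1%g).
  rewrite -[RHS]E; apply: eq_relr => i; by rewrite ffunE.
move=> i; rewrite ffunE /xl /yl /= !qM !valK !mulg1.
by rewrite /x0 /y0 !secK.
Qed.

Definition dec1 (l : {ffun 'I_h -> G' * G'}) i := inG ((x0 i)^-1 * (l i).1)%g.
Definition dec2 (l : {ffun 'I_h -> G' * G'}) i := inG ((y0 i)^-1 * (l i).2)%g.

Lemma liftofK l : is_lift q a b l -> liftof (dec1 l) (dec2 l) = l.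
Proof.
case=> _ hq; apply/ffunP => i; rewrite ffunE /xl /yl /dec1 /dec2.
have [h1 h2] := hq i.
rewrite !val_inG ?mulKVg; first by case: (l i).
- by rewrite qM qV h2 /y0 secK mulVg.
- by rewrite qM qV h1 /x0 secK mulVg.
Qed.

Lemma M_lift : M R0 -> exists l, is_lift q a b l.
Proof.
move=> hR; have [c [e E]] := imFN (M_imF hR).
by exists (liftof c e); apply/liftofP.
Qed.

Lemma part1 : (exists l, is_lift q a b l) <-> in_image_H2 q (surface_class a b).
Proof.
split; first by case=> l; apply: lift_to_hom.
by move=> hi; apply: M_lift; apply: hom_to_M.
Qed.

Definition D := {ffun 'I_h -> GT * GT}.
Definition FD (v : D) := Ff (enum 'I_h) (fun i => (v i).1) (fun i => (v i).2).
Definition fib t := [set v : D | FD v == t].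
Definition shift (v0 v : D) : D := [ffun i => ((v i).1 + (v0 i).1, (v i).2 + (v0 i).2)%R].
Definition negD (v0 : D) : D := [ffun i => (- (v0 i).1, - (v0 i).2)%R].

Lemma FD_shift v0 v : FD (shift v0 v) = (FD v + FD v0)%R.
Proof. by rewrite /FD -Ff_add; apply: Ff_eq => i _; rewrite ffunE. Qed.
Lemma FD_neg v0 : FD (negD v0) = (- FD v0)%R.
Proof. by rewrite /FD -FfN; apply: Ff_eq => i _; rewrite ffunE. Qed.
Lemma shift_inj v0 : injective (shift v0).
Proof.
move=> v v' e; apply/ffunP => i; move: (congr1 (fun f : D => f i) e); rewrite !ffunE.
case=> /addIr e1 /addIr e2.
by rewrite [v i]surjective_pairing [v' i]surjective_pairing e1 e2.
Qed.
Lemma shiftK v0 v : shift v0 (shift (negD v0) v) = v.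
Proof.
apply/ffunP => i; rewrite !ffunE /= !subrK.
by rewrite -surjective_pairing.
Qed.

Lemma fib_card v0 : #|fib (FD v0)| = #|fib 0%R|.
Proof.
have <- : shift v0 @: fib 0%R = fib (FD v0).
  apply/setP => v; apply/imsetP/idP.
    by case=> w; rewrite !inE => /eqP hw ->; rewrite FD_shift hw add0r.
  rewrite inE => /eqP hv; exists (shift (negD v0) v); last by rewrite shiftK.
  by rewrite inE FD_shift FD_neg hv subrr.
by rewrite card_imset //; apply: shift_inj.
Qed.

Lemma card_D_split : #|{: D}| = (#|[set FD v | v : D]| * #|fib 0%R|)%N.
Proof.
rewrite -sum_nat_const.
have -> : #|{: D}| = (\sum_(v : D) 1)%N by rewrite sum1_card.
rewrite (partition_big_imset FD) /=.
apply: eq_bigr => t /imsetP [v0 _ ->]; rewrite -(fib_card v0) sum1_card.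
by apply: eq_card => v; rewrite !inE.
Qed.

Lemma img_card nComm :
  card_is M nComm -> #|[set FD v | v : D]| = nComm.
Proof.
case=> sM [uM <- hM]; rewrite cardE -(size_map val).
apply: perm_size; apply: uniq_perm.
- by rewrite (map_inj_uniq val_inj) enum_uniq.
- exact: uM.
move=> x; apply/idP/idP.
  case/mapP => t; rewrite mem_enum => /imsetP [v _ ->] ->; apply/hM.
  exact: Mt_F.
move=> /hM hx; have [c [e E]] := M_imF hx.
apply/mapP; exists (inG x); last by rewrite val_inG //; apply: M_K.
rewrite mem_enum; apply/imsetP; exists [ffun i => (c i, e i)] => //.
by rewrite -E /FD; apply: Ff_eq => i _; rewrite ffunE.
Qed.

Definition liftD (v : D) := liftof (fun i => (v i).1) (fun i => (v i).2).
Lemma liftD_inj : injective liftD.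
Proof.
move=> v v' e; apply/ffunP => i; move: (congr1 (fun f : {ffun 'I_h -> G' * G'} => f i) e).
rewrite !ffunE /xl /yl; case=> /mulgI/val_inj e1 /mulgI/val_inj e2.
by rewrite [v i]surjective_pairing [v' i]surjective_pairing e1 e2.
Qed.

Definition decD (l : {ffun 'I_h -> G' * G'}) : D := [ffun i => (dec1 l i, dec2 l i)].
Lemma decDK l : is_lift q a b l -> liftD (decD l) = l.
Proof.
move=> hl; rewrite -[RHS](liftofK hl); apply/ffunP => i; rewrite !ffunE.
by rewrite /xl /yl !ffunE.
Qed.
Lemma decD_fib l : is_lift q a b l -> FD (decD l) = (- inG R0)%R.
Proof.
move=> hl; apply/liftofP; rewrite -/(liftD _) decDK //.
Qed.

Lemma count_lifts l0 : is_lift q a b l0 -> card_is (is_lift q a b) #|fib 0%R|.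
Proof.
move=> hl0; exists [seq liftD v | v <- enum (fib (- inG R0)%R)]; split.
- by rewrite (map_inj_uniq liftD_inj) enum_uniq.
- by rewrite size_map -cardE -(decD_fib hl0) fib_card.
move=> l; split.
  case/mapP => v; rewrite mem_enum inE => /eqP hv ->.
  exact/liftofP.
move=> hl; apply/mapP; exists (decD l); last by rewrite decDK.
by rewrite mem_enum inE decD_fib.
Qed.

Hypothesis sGu : uniq sG.
Lemma part2 nComm : (exists l, is_lift q a b l) -> card_is M nComm ->
  exists nHom, card_is (is_lift q a b) nHom /\ (nHom * nComm = (size sG) ^ (2 * h))%N.
Proof.
case=> l0 hl0 hM; exists #|fib 0%R|; split; first exact: count_lifts hl0.
rewrite -(img_card hM) mulnC -card_D_split /D card_ffun card_prod card_ord.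
by rewrite card_seq_sub // mulnn expnM.
Qed.
End Main.

Theorem theorem3p1 (G G' : groupType) (q : G' -> G) (h : nat) (a b : 'I_h -> G) :
  (* q : G' -> G is an epimorphism with finite abelian kernel Gamma *)
  is_hom q ->
  (forall x : G, exists y : G', q y = x) ->
  (exists n, card_is (fun x : G' => q x = 1%g) n) ->
  (forall x y : G', q x = 1%g -> q y = 1%g -> (x * y = y * x)%g) ->
  (* W has positive genus h; b = 2 - chi(W) = 2 h *)
  (0 < h)%N ->
  (* g : pi -> G is a homomorphism (a_i |-> a i, b_i |-> b i) ... *)
  surface_rel a b ->
  (* ... which is onto *)
  (forall x : G, gen_by (fun y => exists i, y = a i \/ y = b i) x) ->
  ((exists l, is_lift q a b l) <-> in_image_H2 q (surface_class a b)) /\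
  ((exists l, is_lift q a b l) ->
   forall nGamma nComm : nat,
     card_is (fun x : G' => q x = 1%g) nGamma ->
     card_is (gen_by (fun x : G' => exists c y : G', q c = 1%g /\ x = [~ c, y]%g))
             nComm ->
     exists nHom : nat,
       card_is (is_lift q a b) nHom /\ (nHom * nComm = nGamma ^ (2 * h))%N).
Proof.
move=> qM qS [n0 [s0 [u0 _ h0]]] Kab _ hrel hgen; split.
  exact: (part1 qM Kab h0 qS hrel hgen).
move=> hl nGamma nComm [s1 [u1 <- h1]] hC.
exact: (part2 qM Kab h1 qS hrel hgen u1 hl hC).
Qed.
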